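(* Let $n$ be a positive integer that is not a power of $2$, let $A$ be an abelian group of order $n$ and let $m$ be the number of elements of $A$ of order at most $2$. Then the number of inverse-closed subsets $S\subseteq A$ for which there exist subgroups $H,K$ with $1<H\leq K<A$ such that $S\setminus K$ is a union of $H$-cosets is at most $2^{m/2+11n/24+2(\log_2 n)^2}$.
   Context: A subset $S$ of a group is inverse-closed if $S^{-1}=S$. *)

(* Defs.v *)
From Stdlib Require Import Reals.
From HB Require Import structures.
From mathcomp Require Import all_boot all_order all_fingroup.
Set Implicit Arguments. Unset Strict Implicit. Unset Printing Implicit Defensive.

Local Open Scope R_scope.
Definition cayley_bound (m n : nat) : R :=
  Rpower 2 (INR m / 2 + 11 * INR n / 24 + 2 * (ln (INR n) / ln 2) ^ 2).

(* Main.v *)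
Require Import Defs.
From Stdlib Require Import Reals.
From HB Require Import structures.
From mathcomp Require Import all_boot all_order all_fingroup.
From Stdlib Require Import Lra.
From mathcomp Require Import all_solvable.
From mathcomp Require Import zify.

Set Implicit Arguments. Unset Strict Implicit. Unset Printing Implicit Defensive.

Section Inv.
Variable T : finType.
Variable f : T -> T.
Hypothesis fK : involutive f.
Definition halfset (Y : {set T}) :=
  [set x in Y | (enum_rank x <= enum_rank (f x))%N].

Lemma halfset_mem (Y : {set T}) x : x \in Y -> f x \in Y ->
  (x \in halfset Y) || (f x \in halfset Y).
Proof.
move=> xY fxY; rewrite !inE xY fxY fK /=; exact: leq_total.
Qed.

Lemma halfset_card (Y : {set T}) : {in Y, forall x, f x \in Y} ->
  (#|halfset Y|).*2 = #|Y| + #|[set x in Y | f x == x]|.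
Proof.
move=> fY.
have injf : injective f := can_inj fK.
rewrite -addnn -{2}(card_imset (halfset Y) injf) -cardsUI.
rewrite (can_imset_pre _ fK).
congr (_ + _); apply: eq_card => x; rewrite !inE fK.
- apply/idP/idP.
    by case/orP=> /andP[] // fxY _; rewrite -[x]fK fY.
  move=> xY; rewrite xY fY //=; exact: leq_total.
- apply/idP/idP.
    case/andP=> /andP[xY le1] /andP[_ le2]; rewrite xY /=.
    apply/eqP; apply: enum_rank_inj; apply: val_inj => /=; apply/eqP; rewrite eqn_leq le1 le2 //.
  case/andP=> xY /eqP fx; rewrite fx xY leqnn.
  by [].
Qed.
End Inv.


Section G.
Local Open Scope group_scope.
Variable gT : finGroupType.
Variables A H K : {group gT}.
Hypothesis abA : abelian A.
Hypotheses (sHK : H \subset K) (sKA : K \subset A).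

Definition Cset := [set X in rcosets H A | X :&: K == set0].
Definition Fset := [set S : {set gT} | (S \subset A) && ((S^-1)%g == S) &&
   [exists P : {set {set gT}}, (P \subset rcosets H A) && (S :\: K == cover P)]].
Definition HR1 := halfset (fun x : gT => x^-1)%g K.
Definition HR2 := halfset (fun X : {set gT} => X^-1)%g Cset.

Lemma sHA : H \subset A. Proof. exact: subset_trans sHK sKA. Qed.

Lemma coset_in_C x : x \in A -> x \notin K -> (H :* x)%g \in Cset.
Proof.
move=> xA xK; rewrite inE; apply/andP; split; first by apply/rcosetsP; exists x.
apply/eqP/setP=> y; rewrite !inE; apply/negP=> /andP[]; rewrite mem_rcoset => yx yK.
have hK : y * x^-1 \in K := subsetP sHK _ yx.
have : (y * x^-1)^-1 * y \in K by rewrite groupM ?groupV.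
by rewrite invMg invgK mulgKV (negbTE xK).
Qed.

Lemma coset_inv x : x \in A -> ((H :* x)^-1)%g = (H :* x^-1)%g.
Proof.
move=> xA; rewrite invg_rcoset norm_rlcoset //.
apply: (subsetP (sub_abelian_norm abA sHA)); by rewrite groupV.
Qed.

Lemma Fset_coset S x : S \in Fset -> x \in A -> x \notin K ->
  (x \in S) = ((H :* x)%g \subset S).
Proof.
rewrite inE => /andP[/andP[sSA _] /existsP[P /andP[sPR /eqP eS]]] xA xK.
apply/idP/idP; last by move/subsetP; apply; exact: rcoset_refl.
move=> xS; have: x \in S :\: K by rewrite inE xK.
rewrite eS => /bigcupP[Y YP xY].
have /rcosetsP[y yA eY] := subsetP sPR Y YP.
have -> : (H :* x)%g = Y by rewrite eY; apply/rcoset_eqP; rewrite -eY.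
apply: (subset_trans (bigcup_sup Y YP)); rewrite -/(cover P) -eS; exact: subsetDl.
Qed.

Lemma Fset_inv S x : S \in Fset -> (x^-1 \in S) = (x \in S).
Proof.
rewrite inE => /andP[/andP[_ /eqP eS] _].
by rewrite -{1}eS mem_invg invgK.
Qed.

Definition phi (S : {set gT}) := (S :&: HR1, [set X in HR2 | X \subset S]).

Lemma phi_inj : {in Fset &, injective phi}.
Proof.
move=> S S' FS FS' [e1 e2].
have sSA : S \subset A by move: FS; rewrite inE => /andP[/andP[]].
have sSA' : S' \subset A by move: FS'; rewrite inE => /andP[/andP[]].
apply/setP=> x.
case xA: (x \in A); last first.
  apply/idP/idP => [/(subsetP sSA)|/(subsetP sSA')]; by rewrite xA.
have key : forall y, y \in HR1 -> (y \in S) = (y \in S').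
  move=> y yR; have := congr1 (fun Z : {set gT} => y \in Z) e1; by rewrite /= !in_setI yR !andbT.
have key2 : forall X, X \in HR2 -> (X \subset S) = (X \subset S').
  move=> X XR; have := congr1 (fun Z : {set {set gT}} => X \in Z) e2; move: XR; rewrite /= !inE => /andP[-> ->].
  by [].
case xK: (x \in K).
  have /orP[xR|xR] := halfset_mem (f := fun x : gT => x^-1) (fun x => invgK x) xK (groupVr xK); first exact: key.
  by rewrite -(Fset_inv x FS) -(Fset_inv x FS') key.
have xC := coset_in_C xA (negbT xK).
have xCV : ((H :* x)^-1)%g \in Cset.
  rewrite coset_inv //; apply: coset_in_C; rewrite ?groupV ?xK //.
have /orP[XR|XR] := halfset_mem (f := fun X : {set gT} => X^-1) (fun X => invgK X) xC xCV.
  by rewrite (Fset_coset FS xA (negbT xK)) (Fset_coset FS' xA (negbT xK)) key2.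
move: XR; rewrite coset_inv // => XR.
rewrite -(Fset_inv x FS) -(Fset_inv x FS').
have xVA : x^-1 \in A by rewrite groupV.
have xVK : x^-1 \notin K by rewrite groupV xK.
by rewrite (Fset_coset FS xVA xVK) (Fset_coset FS' xVA xVK) key2.
Qed.

Lemma card_Fset : (#|Fset| <= 2 ^ (#|HR1| + #|HR2|))%N.
Proof.
rewrite -(card_in_imset phi_inj) expnD -!card_powerset -cardsX.
apply: subset_leq_card; apply/subsetP => z /imsetP[S _ ->].
rewrite !inE /= subsetIr /=.
by apply/subsetP=> X; rewrite inE => /andP[].
Qed.

End G.


Section C.
Local Open Scope group_scope.
Variable gT : finGroupType.
Variables A H K : {group gT}.
Hypothesis abA : abelian A.
Hypotheses (sHK : H \subset K) (sKA : K \subset A).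

Definition Om := [set x in A | (#[x] <= 2)%N].
Definition OmK := [set x in K | x^-1 == x].

Lemma ord2E (x : gT) : (#[x] <= 2)%N = (x ^+ 2 == 1).
Proof.
rewrite -order_dvdn; apply/idP/idP; last exact: dvdn_leq.
have := order_gt0 x; case: #[x] => [|[|[|]]] //.
Qed.

Lemma invE (x : gT) : (x^-1 == x) = (x ^+ 2 == 1).
Proof.
rewrite expgS expg1; apply/eqP/eqP => h; first by rewrite -{1}h mulVg.
by rewrite -[x^-1]mulg1 -h mulgA mulVg mul1g.
Qed.

Lemma mK_le : (#|OmK| <= #|Om|)%N.
Proof.
apply: subset_leq_card; apply/subsetP => x; rewrite !inE => /andP[xK].
by rewrite invE ord2E (subsetP sKA).
Qed.

Lemma Cset_inv X : X \in Cset A H K -> X^-1 \in Cset A H K.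
Proof.
rewrite inE => /andP[/rcosetsP[x xA ->] /eqP dis].
rewrite (coset_inv abA sHK sKA) //; apply: (coset_in_C sHK) ; rewrite ?groupV //.
apply/negP => xK; have : x \in H :* x :&: K by rewrite inE rcoset_refl.
by rewrite dis inE.
Qed.

Lemma R1_card : ((#|HR1 K|).*2 = #|K| + #|OmK|)%N.
Proof. by apply: halfset_card => [x|x]; [exact: invgK | exact: groupVr]. Qed.

Lemma R2_card : ((#|HR2 A H K|).*2 = #|Cset A H K| + #|[set X in Cset A H K | X^-1 == X]|)%N.
Proof. by apply: halfset_card => [X|X]; [exact: invgK | exact: Cset_inv]. Qed.

Lemma partC (P : {set {set gT}}) : P \subset Cset A H K -> partition P (cover P).
Proof.
move=> sP; apply/and3P; split => //.
  apply: (trivIsetS _ (partition_trivIset (rcosets_partition (sHA sHK sKA)))).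
  by apply: (subset_trans sP); apply/subsetP => X; rewrite inE => /andP[].
apply/negP => /(subsetP sP); rewrite inE => /andP[/rcosetsP[x _ e] _].
by have := rcoset_refl H x; rewrite -e inE.
Qed.

Lemma cover_card (P : {set {set gT}}) : P \subset Cset A H K ->
  #|cover P| = (#|P| * #|H|)%N.
Proof.
move=> sP; apply: card_uniform_partition (partC sP) => X /(subsetP sP).
by rewrite inE => /andP[/rcosetsP[x _ ->] _]; rewrite card_rcoset.
Qed.

Lemma NK_le : (#|Cset A H K| * #|H| + #|K| <= #|A|)%N.
Proof.
rewrite -cover_card //.
have -> : #|A| = (#|A :\: K| + #|K|)%N.
  by rewrite cardsDS // subnK // subset_leq_card.
rewrite leq_add2r; apply: subset_leq_card; apply/subsetP => x /bigcupP[X].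
rewrite inE => /andP[/rcosetsP[y yA ->] /eqP dis] xX.
rewrite inE; apply/andP; split.
  apply/negP => xK; have : x \in H :* y :&: K by rewrite inE xX.
  by rewrite dis inE.
move: xX; rewrite mem_rcoset => hx.
by rewrite -[x](mulgKV y) groupM // (subsetP (sHA sHK sKA)).
Qed.

Lemma fiber_le (y : gT) : (#|[set x in A | x ^+ 2 == y]| <= #|Om|)%N.
Proof.
case: (set_0Vmem [set x in A | x ^+ 2 == y]) => [->|[x0]]; first by rewrite cards0.
rewrite inE => /andP[x0A /eqP x0y].
have inj : injective (fun x => x0^-1 * x) by exact: mulgI.
rewrite -(card_imset _ inj); apply: subset_leq_card; apply/subsetP => z.
case/imsetP => x; rewrite inE => /andP[xA /eqP xy] ->.
rewrite inE groupM ?groupV //= ord2E expgMn.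
  by rewrite expVgn x0y xy mulVg.
apply/commute_sym; apply: commuteV; apply/commute_sym; apply: (centsP (sub_abelian_cent abA (subxx A))) => //.
Qed.

Lemma E_le : (#|[set x in A | x ^+ 2 \in H]| <= #|H| * #|Om|)%N.
Proof.
have -> : [set x in A | x ^+ 2 \in H] = \bigcup_(y in H) [set x in A | x ^+ 2 == y].
  apply/setP => x; rewrite inE; apply/idP/bigcupP => [/andP[xA xH]|[y yH]].
    by exists (x ^+ 2); rewrite // inE xA /=.
  by rewrite inE => /andP[-> /eqP ->].
rewrite -sum_nat_const.
apply: (big_ind2 (fun (X : {set gT}) s => #|X| <= s)%N) => //.
  by rewrite cards0.
  move=> X1 s1 X2 s2 h1 h2; rewrite (leq_trans (leq_card_setU _ _)) //.
  exact: leq_add.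
move=> y _; exact: fiber_le.
Qed.

Lemma c_le : (#|[set X in Cset A H K | X^-1 == X]| * #|H| + #|OmK| <= #|H| * #|Om|)%N.
Proof.
rewrite -cover_card; last by apply/subsetP => X; rewrite inE => /andP[].
apply: leq_trans E_le; rewrite -cardsUI.
set P := [set X in Cset A H K | X^-1 == X].
have -> : cover P :&: OmK = set0.
  apply/setP => x; rewrite !inE; apply/negP => /andP[/bigcupP[X]].
  rewrite !inE => /andP[/andP[_ /eqP dis] _] xX /andP[xK _].
  have : x \in X :&: K by rewrite inE xX.
  by rewrite dis inE.
rewrite cards0 addn0.
apply: subset_leq_card; apply/subsetP => x; rewrite inE => /orP[].
  case/bigcupP => X; rewrite !inE => /andP[/andP[/rcosetsP[y yA eX] /eqP dis] /eqP XV] xX.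
  have xA : x \in A.
    move: xX; rewrite eX mem_rcoset => hx.
    by rewrite -[x](mulgKV y) groupM // (subsetP (sHA sHK sKA)).
  rewrite xA /=.
  have eX' : X = H :* x by rewrite eX; apply/rcoset_eqP; rewrite rcoset_sym -eX.
  have : x^-1 \in X by rewrite -XV mem_invg invgK.
  rewrite eX' mem_rcoset => hx.
  by rewrite -[x ^+ 2]invgK -expVgn groupV expgS expg1.
rewrite inE => /andP[xK]; rewrite invE => /eqP e.
by rewrite inE e (subsetP sKA) // group1.
Qed.
End C.


Section D.
Local Open Scope group_scope.
Variable gT : finGroupType.
Variables A : {group gT}.
Hypothesis abA : abelian A.

Lemma Om_group : group_set (Om A).
Proof.
apply/group_setP; split; first by rewrite /Om inE group1 /= ord2E expg1n.
move=> x y; rewrite /Om !inE !ord2E => /andP[xA /eqP x2] /andP[yA /eqP y2].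
rewrite groupM //= expgMn ?x2 ?y2 ?mulg1 //.
by apply: (centsP (sub_abelian_cent abA (subxx A))).
Qed.

Lemma m3 : ~ (exists k : nat, #|A| = (2 ^ k)%N) -> (3 * #|Om A| <= #|A|)%N.
Proof.
move=> hnp.
pose G := Group Om_group.
have sGA : G \subset A by apply/subsetP => x; rewrite inE => /andP[].
have /dvdnP[q eq] := cardSg sGA.
have m2 : 2.-nat #|G|.
  apply/pnatP => // p pp pd.
  have [x xG ox] := Cauchy pp pd.
  move: xG; rewrite inE ox => /andP[_ le2].
  have := prime_gt1 pp; rewrite inE.
  by case: p pp pd ox le2 => [|[|[|]]].
have [j ej] := p_natP m2.
have : q != 0%N by apply/eqP => q0; have := cardG_gt0 A; rewrite eq q0.
have : q != 1%N by apply/eqP => q1; apply: hnp; exists j; rewrite eq q1 mul1n ej.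
have : q != 2%N by apply/eqP => q2; apply: hnp; exists j.+1; rewrite eq q2 ej expnS mulnC.
rewrite eq -[#|Om A|]/#|G| => a b c; rewrite leq_mul2r; apply/orP; right; lia.
Qed.

Lemma k2 (K : {group gT}) : K \proper A -> (2 * #|K| <= #|A|)%N.
Proof.
move=> pK; have /dvdnP[q eq] := cardSg (proper_sub pK).
have := proper_card pK; rewrite eq.
case: q {eq} => [|[|q]]; rewrite ?mul0n ?mul1n ?ltnn //; nia.
Qed.

Lemma h2 (H : {group gT}) : (1%G \proper H) -> (2 <= #|H|)%N.
Proof. by move/proper_card; rewrite cards1. Qed.

Lemma pair_bound (H K : {group gT}) :
  ~ (exists k : nat, #|A| = (2 ^ k)%N) ->
  (1%G \proper H) -> H \subset K -> K \proper A ->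
  (24 * (#|HR1 K| + #|HR2 A H K|) <= 12 * #|Om A| + 11 * #|A|)%N.
Proof.
move=> hnp pH sHK pK.
have sKA := proper_sub pK.
have e1 := R1_card K.
have e2 := R2_card abA sHK sKA.
have f3 := mK_le sKA.
have f4 := NK_le sHK sKA.
have f6 := m3 hnp.
have f7 := k2 pK.
have f8 := h2 pH.
have f9 := c_le abA sHK sKA.
have f5 : (#|[set X in Cset A H K | X^-1 == X]| <= #|Cset A H K|)%N.
  by apply: subset_leq_card; apply/subsetP => X; rewrite inE => /andP[].
move: e1 e2 f3 f4 f6 f7 f8 f9 f5.
set r1 := #|HR1 K|; set r2 := #|HR2 A H K|; set N := #|Cset A H K|.
set c := #|[set X in Cset A H K | X^-1 == X]|.
set h := #|H|; set k := #|K|; set mK := #|OmK K|; set m := #|Om A|; set n := #|A|.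
move=> e1 e2 f3 f4 f6 f7 f8 f9 f5.
have [h2'|h3] := eqVneq h 2%N.
  rewrite h2' in f4 f9; rewrite -!muln2 in e1 e2; lia.
have h3' : (3 <= h)%N by lia.
have : (3 * N <= h * N)%N by rewrite leq_mul2r h3' orbT.
rewrite -!muln2 in e1 e2; nia.
Qed.
End D.


Section E.
Local Open Scope group_scope.
Variable gT : finGroupType.

Lemma gen_step (G : {group gT}) j : exists s : seq gT,
  [/\ {subset s <= G}, (2 ^ size s <= #|<<[set:: s]>>|)%N &
      (<<[set:: s]>> = G) \/ size s = j].
Proof.
elim: j => [|j [s [sG c2 [eG|sj]]]].
- exists [::]; split => //; last by right.
  by rewrite cardG_gt0.
- by exists s; split => //; left.
have sub : <<[set:: s]>> \subset G.
  by rewrite gen_subG; apply/subsetP => x; rewrite inE => /sG.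
have [eG|neG] := eqVneq (<<[set:: s]>> : {set gT}) G.
  by exists s; split => //; left.
have : ~~ (G \subset <<[set:: s]>>).
  by apply: contra neG => h; rewrite eqEsubset sub h.
case/subsetPn => x xG xn.
exists (x :: s); split.
- by move=> y; rewrite inE => /orP[/eqP->|/sG].
- rewrite /= expnS sj.
  have sub2 : <<[set:: s]>> \subset <<[set:: x :: s]>>.
    by apply: genS; apply/subsetP => y; rewrite !inE => ->; rewrite orbT.
  have pr : <<[set:: s]>> \proper <<[set:: x :: s]>>.
    rewrite properEneq sub2 andbT; apply/eqP => e.
    by move: xn; rewrite e (subsetP (subset_gen _)) // !inE eqxx.
  have /dvdnP[q eq] := cardSg sub2.
  have := proper_card pr; rewrite eq -sj => lt.
  apply: (leq_trans (leq_mul (leqnn 2) c2)).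
  case: q eq lt => [|[|q]] eq; rewrite ?mul0n ?mul1n ?ltnn // => _.
  by apply: leq_mul; [by [] | exact: leqnn].
- by right; rewrite /= sj.
Qed.

Lemma gen_seq (G : {group gT}) : exists s : seq gT,
  [/\ {subset s <= G}, (2 ^ size s <= #|G|)%N & <<[set:: s]>> = G].
Proof.
have [s [sG c2 [eG|sj]]] := gen_step G #|G|.
  by exists s; split => //; rewrite -eG.
exfalso.
have sub : <<[set:: s]>> \subset G.
  by rewrite gen_subG; apply/subsetP => x; rewrite inE => /sG.
have := leq_trans c2 (subset_leq_card sub); rewrite sj.
by rewrite leqNgt ltn_expl.
Qed.

Lemma sub_count (A : {group gT}) :
  (#|[set G : {group gT} | G \subset A]| <= #|A| ^ trunc_log 2 #|A|)%N.
Proof.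
set L := trunc_log 2 #|A|.
pose F (f : {ffun 'I_L -> gT}) := (<<[set f i | i : 'I_L]>>)%G.
have -> : (#|A| ^ L)%N = #|ffun_on_mem 'I_L (mem A)| by rewrite card_ffun_on card_ord.
apply: (leq_trans _ (leq_imset_card F _)).
apply: subset_leq_card; apply/subsetP => G; rewrite inE => sGA.
have [s [sG c2 eG]] := gen_seq G.
have sL : (size s <= L)%N.
  apply: trunc_log_max => //; apply: leq_trans c2 _; exact: subset_leq_card.
pose f := [ffun i : 'I_L => nth 1 s i].
apply/imsetP; exists f.
  apply/ffun_onP => i; rewrite ffunE.
  case: (ltnP i (size s)) => hi; first by apply: (subsetP sGA); apply: sG; exact: mem_nth.
  by rewrite nth_default // group1.
apply: val_inj => /=; rewrite -eG.
apply/eqP; rewrite eqEsubset; apply/andP; split.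
  rewrite gen_subG; apply/subsetP => x; rewrite inE => xs.
  rewrite -index_mem in xs.
  apply: (subsetP (subset_gen _)); apply/imsetP.
  exists (Ordinal (leq_trans xs sL)) => //; rewrite ffunE /= nth_index //.
  by rewrite -index_mem.
rewrite gen_subG; apply/subsetP => x /imsetP[i _ ->]; rewrite ffunE.
case: (ltnP i (size s)) => hi; last by rewrite nth_default // group1.
by apply: (subsetP (subset_gen _)); rewrite inE mem_nth.
Qed.
End E.

Unset Implicit Arguments. Set Strict Implicit.

Lemma card_bigcup_le (I T : finType) (P : pred I) (F : I -> {set T}) :
  (#|\bigcup_(i | P i) F i| <= \sum_(i | P i) #|F i|)%N.
Proof.
apply: (big_ind2 (fun (X : {set T}) s => #|X| <= s)%N) => //.
  by rewrite cards0.
move=> X1 s1 X2 s2 h1 h2; rewrite (leq_trans (leq_card_setU _ _)) //.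
exact: leq_add.
Qed.

Section RealPart.
Local Open Scope R_scope.
Lemma INR_expn (a k : nat) : INR (a ^ k)%N = INR a ^ k.
Proof. elim: k => [|k IH] //=; rewrite expnS mult_INR IH //. Qed.

Lemma real_part (n L b m : nat) : (0 < n)%N -> (2 ^ L <= n)%N ->
  (b * 24 <= 12 * m + 11 * n)%N ->
  Rle (INR (n ^ L * n ^ L * 2 ^ b)) (cayley_bound m n).
Proof.
move=> n0 hL hb.
have n0' : (0 < INR n) by apply: lt_0_INR; apply/ltP.
set l := (ln (INR n) / ln 2).
have ln2 : (0 < ln 2) by have := ln_lt_2; lra.
have en : Rpower 2 l = INR n.
  rewrite /Rpower /l.
  replace (ln (INR n) / ln 2 * ln 2) with (ln (INR n)) by (field; lra).
  exact: exp_ln.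
have Ll : Rle (INR L) l.
  apply: Rnot_lt_le => h.
  have := Rpower_lt 2 _ _ ltac:(lra) h; rewrite en Rpower_pow; last lra.
  have : Rle (INR (2 ^ L)) (INR n) by apply: le_INR; apply/leP.
  rewrite INR_expn; replace (INR 2) with 2 by (simpl; lra); lra.
have l0 : Rle 0 l by have := pos_INR L; lra.
have e1 : Rle (INR n ^ L) (Rpower 2 (l ^ 2)).
  rewrite -Rpower_pow // -en Rpower_mult; apply: Rle_Rpower; first lra.
  rewrite /= Rmult_1_r; apply: Rmult_le_compat_l => //.
have e2 : Rle (2 ^ b) (Rpower 2 (INR m / 2 + 11 * INR n / 24)).
  rewrite -Rpower_pow; last lra.
  apply: Rle_Rpower; first lra.
  have : Rle (INR (b * 24)) (INR (12 * m + 11 * n)) by apply: le_INR; apply/leP.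
  rewrite plus_INR !mult_INR /=; lra.
rewrite /cayley_bound !mult_INR !INR_expn; replace (INR 2) with 2 by (simpl; lra).
have -> : (INR m / 2 + 11 * INR n / 24 + 2 * (ln (INR n) / ln 2) ^ 2 =
   (INR m / 2 + 11 * INR n / 24) + (l ^ 2 + l ^ 2)) by rewrite /l; ring.
rewrite (Rpower_plus (INR m / 2 + 11 * INR n / 24)) (Rpower_plus (l ^ 2)).
have p1 : Rle 0 (INR n ^ L) by apply: pow_le; lra.
have p2 : Rle 0 (2 ^ b) by apply: pow_le; lra.
rewrite Rmult_comm; apply: Rmult_le_compat => //.
  by apply: Rmult_le_pos.
by apply: Rmult_le_compat.
Qed.
End RealPart.

Theorem lemma5p4 (gT : finGroupType) (A : {group gT}) (n : nat)
  (hA : abelian A) (hn : #|A| = n) (hn0 : (0 < n)%N)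
  (hnp : ~ (exists k : nat, n = (2 ^ k)%N)) :
  Rle
    (INR #|[set S : {set gT} | (S \subset A) &&
      [exists H : {group gT}, [exists K : {group gT},
        [&& (1%G \proper H)%g, (H \subset K), (K \proper A),
            ((S^-1)%g == S) &
            [exists P : {set {set gT}},
               (P \subset rcosets H A) && (S :\: K == cover P)]]]]]|)
    (cayley_bound #|[set x in A | (#[x]%g <= 2)%N]| n).
Proof.
set Fam := [set S : {set gT} | _].
set m := #|[set x in A | _]|.
set L := trunc_log 2 n.
set b := ((12 * m + 11 * n) %/ 24)%N.
have hnp' : ~ (exists k : nat, #|A| = (2 ^ k)%N) by rewrite hn.
have key : (#|Fam| <= n ^ L * n ^ L * 2 ^ b)%N.
  pose G2 (H K : {group gT}) := [set S in Fset A H K |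
     [&& (1%G \proper H)%g, H \subset K & K \proper A]].
  pose Sub := [set G : {group gT} | G \subset A].
  have sF : Fam \subset \bigcup_(H in Sub) \bigcup_(K in Sub) G2 H K.
    apply/subsetP => S; rewrite inE => /andP[sSA /existsP[H /existsP[K]]].
    case/and5P => pH sHK pK eS /existsP[P /andP[sP eP]].
    have sKA := proper_sub pK.
    apply/bigcupP; exists H; first by rewrite inE (subset_trans sHK sKA).
    apply/bigcupP; exists K; first by rewrite inE sKA.
    rewrite !inE sSA eS pH sHK pK /= andbT; by apply/existsP; exists P; rewrite sP eP.
  apply: leq_trans (subset_leq_card sF) _.
  apply: leq_trans (card_bigcup_le _ _ _ _) _.
  have hS : (#|Sub| <= n ^ L)%N by rewrite /L -hn; exact: sub_count.
  have each : forall H K : {group gT}, (#|G2 H K| <= 2 ^ b)%N.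
    move=> H K; case/boolP: [&& (1%G \proper H)%g, H \subset K & K \proper A] => c.
      case/and3P: (c) => pH sHK pK.
      have sKA := proper_sub pK.
      apply: leq_trans (subset_leq_card (_ : G2 H K \subset Fset A H K)) _.
        by apply/subsetP => S; rewrite inE => /andP[].
      apply: leq_trans (card_Fset hA sHK sKA) _.
      rewrite leq_exp2l // /b leq_divRL //.
      have := pair_bound hA hnp' pH sHK pK; rewrite hn; change #|Om A| with m; lia.
    rewrite (_ : G2 H K = set0) ?cards0 //.
    by apply/setP => S; rewrite !inE (negbTE c) andbF.
  apply: (@leq_trans (\sum_(H in Sub) (n ^ L * 2 ^ b))%N).
    apply: leq_sum => H _.
    apply: leq_trans (card_bigcup_le _ _ _ _) _.
    rewrite -[(n ^ L * 2 ^ b)%N]/(n ^ L * 2 ^ b)%N.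
    apply: (@leq_trans (\sum_(K in Sub) 2 ^ b)%N).
      by apply: leq_sum => K _; exact: each.
    by rewrite sum_nat_const leq_mul2r hS orbT.
  by rewrite sum_nat_const -mulnA leq_mul2r hS orbT.
have hb : (b * 24 <= 12 * m + 11 * n)%N by exact: leq_trunc_div.
apply: (Rle_trans _ _ _ _ (real_part n L b m hn0 (trunc_logP (isT : (1 < 2)%N) hn0) hb)).
apply: le_INR; apply/leP; exact: key.
Qed.
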